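(* Fix an integer $L\ge1$ and $\alpha>0$, and let $N_{RF}\ge1$ be any number of RF chains. For the IT-SU interleaved training scheme with $N_t$ beams, $L$ channel paths, $N_{RF}$ RF chains and threshold $\alpha$ described in the context, the average training length satisfies, as $N_t\to\infty$, $$T_{\text{IT-SU}}=\frac{N_t}{L+1}+\mathcal O(1),$$ where $\mathcal O(1)$ denotes a quantity bounded as $N_t\to\infty$ (with $L,\alpha$ fixed).
   Context: Channel model: for integers $N_t\ge L$, a random subset $\mathcal I\subset\{1,\dots,N_t\}$ with $|\mathcal I|=L$ is drawn uniformly among all $L$-element subsets; conditionally on $\mathcal I$, the coefficients $\bar h_i$, $i\in\mathcal I$, are i.i.d. circularly symmetric complex Gaussian $\mathcal{CN}(0,1/L)$, and $\bar h_i=0$ for $i\notin\mathcal I$. IT-SU scheme (with $N_{RF}\ge1$ RF chains and threshold $\alpha>0$): for $i=1,2,\dots,N_t$ in order, beam $i$ is trained, i.e. $\bar h_i$ becomes known. After step $i$, let $\mathcal B_i=\{l\le i:\bar h_l\neq 0\}$, $L_{B_i}=\min(N_{RF},|\mathcal B_i|)$, and let $\mathcal S_i\subset\mathcal B_i$ be the indices of the $L_{B_i}$ elements of $\mathcal B_i$ with largest $|\bar h_l|$. The training terminates at step $i$ if $\bar h_i\ne 0$ and $\sum_{l\in\mathcal S_i}|\bar h_l|^2>\alpha/N_t$; otherwise it proceeds to step $i+1$. The training length $T$ is the step at which the training terminates, and $T=N_t$ if it never terminates. The average training length is $T_{\text{IT-SU}}=\mathrm E[T]$. *)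

(* Defs.v *)
From HB Require Import structures.
From mathcomp Require Import all_boot all_order all_algebra.
From mathcomp Require Import all_classical all_reals all_analysis.
From mathcomp Require Import normal_distribution.

Set Implicit Arguments.
Unset Strict Implicit.
Unset Printing Implicit Defensive.

Import Order.TTheory GRing.Theory Num.Theory.

Local Open Scope classical_set_scope.
Local Open Scope ring_scope.

Section ITSU.
Variable R : realType.

(* Channel realization: real and imaginary parts of the coefficients
   \bar h_i, i = 0 .. Nt-1 (beam i+1 of the paper). *)

Definition sqmag (Nt : nat) (re im : 'I_Nt -> R) (l : 'I_Nt) : R :=
  re l ^+ 2 + im l ^+ 2.

Definition nonzero (Nt : nat) (re im : 'I_Nt -> R) (l : 'I_Nt) : bool :=
  (re l != 0) || (im l != 0).

Definition Bset (Nt : nat) (re im : 'I_Nt -> R) (i : 'I_Nt) : {set 'I_Nt} :=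
  [set l : 'I_Nt | (l <= i)%N && nonzero re im l].

Definition LB (NRF Nt : nat) (re im : 'I_Nt -> R) (i : 'I_Nt) : nat :=
  minn NRF #|Bset re im i|.

(* sum_{l in S_i} |\bar h_l|^2 : the sum of the L_{B_i} largest values of
   |\bar h_l|^2 over l in B_i (values sorted in nonincreasing order). *)
Definition topsum (NRF Nt : nat) (re im : 'I_Nt -> R) (i : 'I_Nt) : R :=
  \sum_(x <- take (LB NRF re im i)
                  (sort (fun x y : R => y <= x)
                        [seq sqmag re im l | l <- enum (Bset re im i)])) x.

Definition stops (NRF Nt : nat) (alpha : R) (re im : 'I_Nt -> R) (i : 'I_Nt)
  : bool :=
  nonzero re im i && (alpha / Nt%:R < topsum NRF re im i).

(* training length T (1-based step index); T = Nt if never terminates *)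
Definition train_len (NRF Nt : nat) (alpha : R) (re im : 'I_Nt -> R) : nat :=
  let s := enum 'I_Nt in
  if has (stops NRF alpha re im) s then (find (stops NRF alpha re im) s).+1
  else Nt.

End ITSU.

(* Main.v *)
Require Import Defs.
From HB Require Import structures.
From mathcomp Require Import all_boot all_order all_algebra.
From mathcomp Require Import all_classical all_reals all_analysis.
From mathcomp Require Import normal_distribution.
Import Order.TTheory GRing.Theory Num.Theory.
Local Open Scope classical_set_scope.
Local Open Scope ring_scope.
From mathcomp Require Import measurable_realfun ring lra.
Lemma train_len_min (R : realType) NRF Nt (alpha : R) (re im : 'I_Nt -> R)
  (S : {set 'I_Nt}) (m : 'I_Nt) :
  (1 <= NRF)%N -> m \in S -> (forall j, j \in S -> (m <= j)%N) ->
  (forall i, i \notin S -> re i = 0 /\ im i = 0) ->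
  alpha / Nt%:R < sqmag re im m -> 0 <= alpha / Nt%:R ->
  train_len NRF alpha re im = m.+1.
Proof.
move=> hN mS mmin zero hlt r0.
have nzm : nonzero re im m.
  rewrite /nonzero; apply/negPn/negP; rewrite negb_or => /andP[/negPn/eqP h1 /negPn/eqP h2].
  by move: hlt; rewrite /sqmag h1 h2 expr0n /= addr0 => /(le_lt_trans r0); rewrite ltxx.
have nzl : forall l : 'I_Nt, (l < m)%N -> ~~ nonzero re im l.
  move=> l lm; have lS : l \notin S.
    by apply/negP => /mmin; rewrite leqNgt lm.
  by rewrite /nonzero; have [-> ->] := zero _ lS; rewrite eqxx.
have Bm : Bset re im m = [set m]%SET.
  apply/setP => l; rewrite !inE; case: (ltngtP l m) => [lm|ml|/val_inj ->].
  - by rewrite (negbTE (nzl _ lm)) andbF; apply/esym/negbTE; rewrite neq_ltn lm.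
  - by apply/esym/negbTE; rewrite neq_ltn ml orbT.
  - by rewrite eqxx nzm.
have top : topsum NRF re im m = sqmag re im m.
  rewrite /topsum /LB Bm cards1 enum_set1 /=.
  have -> : minn NRF 1 = 1%N by apply/minn_idPr.
  by rewrite /= big_seq1.
have stm : stops NRF alpha re im m by rewrite /stops nzm top.
have nst : forall l : 'I_Nt, (l < m)%N -> ~~ stops NRF alpha re im l.
  by move=> l lm; rewrite /stops (negbTE (nzl _ lm)).
have hs : has (stops NRF alpha re im) (enum 'I_Nt).
  by apply/hasP; exists m => //; rewrite mem_enum.
rewrite /train_len hs; congr (_.+1).
have fs : (find (stops NRF alpha re im) (enum 'I_Nt) < Nt)%N.
  by have := hs; rewrite has_find size_enum_ord.
apply/eqP; rewrite eqn_leq; apply/andP; split.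
  rewrite leqNgt; apply/negP => hmf; have := before_find m hmf.
  have -> : nth m (enum 'I_Nt) m = m by apply: val_inj; rewrite /= nth_enum_ord.
  by rewrite stm.
rewrite leqNgt; apply/negP => fm.
have := nth_find m hs.
set f := find _ _ in fs fm *.
have -> : nth m (enum 'I_Nt) f = Ordinal fs by apply: val_inj; rewrite /= nth_enum_ord.
by apply/negP; apply: nst.
Qed.
Definition cnt n (S : {set 'I_n}) : nat :=
  #|[set k : 'I_n | [forall j in S, (k <= j)%N]]%SET|.
Arguments cnt {n}.

Lemma card_up n k : #|[set j : 'I_n | (k <= j)%N]%SET| = (n - k)%N.
Proof.
have := @big_geq_mkord _ 0%N addn k n xpredT (fun _ => 1%N).
rewrite sum_nat_const_nat muln1 => h.
by rewrite -sum1dep_card h.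
Qed.

Lemma card_le n m : (m < n)%N -> #|[set k : 'I_n | (k <= m)%N]%SET| = m.+1.
Proof.
move=> mn.
have := @big_nat_widen _ 0%N addn 0 m.+1 n xpredT (fun _ => 1%N) mn.
rewrite sum_nat_const_nat muln1 subn0 big_mkord => h.
by rewrite -sum1dep_card h.
Qed.

Lemma cnt_min n (S : {set 'I_n}) (m : 'I_n) :
  m \in S -> (forall j, j \in S -> (m <= j)%N) -> cnt S = m.+1.
Proof.
move=> mS mmin; rewrite /cnt -(@card_le n m (ltn_ord m)); apply: eq_card => k.
rewrite !inE; apply/forallP/idP => [/(_ m)|km j].
  by rewrite mS.
by apply/implyP => /mmin; apply: leq_trans.
Qed.

Lemma hockey n L : (\sum_(k < n) 'C(n - k, L.+1) = 'C(n.+1, L.+2))%N.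
Proof.
elim: n => [|n IH]; first by rewrite big_ord0 bin_small.
rewrite big_ord_recl /= subn0.
rewrite (eq_bigr (fun i : 'I_n => 'C(n - i, L.+1))); last by move=> i _; rewrite /bump /= add1n subSS.
by rewrite IH [in RHS]binS addnC.
Qed.

Lemma sum_cnt n L :
  (\sum_(S : {set 'I_n} | #|S| == L.+1) cnt S = 'C(n.+1, L.+2))%N.
Proof.
rewrite -hockey.
transitivity (\sum_(S : {set 'I_n} | #|S| == L.+1) \sum_(k < n)
   (if [forall j in S, (k <= j)%N] then 1 else 0))%N.
  apply: eq_bigr => S _; rewrite /cnt -sum1dep_card big_mkcond /=.
  by apply: eq_bigr.
rewrite exchange_big /=; apply: eq_bigr => k _.
rewrite -big_mkcondr sum1dep_card -card_up -cards_draws.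
apply: eq_card => S; rewrite !inE andbC; congr (_ && _).

apply/forallP/fintype.subsetP => [h j jS|h j]; first by rewrite inE; have := h j; rewrite jS.
by apply/implyP => /h; rewrite inE.
Qed.
Lemma le_integral_any d (T : measurableType d) (R : realType)
  (mu : {measure set T -> \bar R}) (f g : T -> \bar R) :
  (forall x, 0 <= f x)%E -> (forall x, f x <= g x)%E ->
  (\int[mu]_x f x <= \int[mu]_x g x)%E.
Proof.
move=> f0 fg; rewrite !ge0_integralTE //; last by move=> x; exact: le_trans (f0 x) (fg x).
apply: ereal_sup_le => _ [h hf <-]; exists h => // x; exact: le_trans (hf x) (fg x).
Qed.

Definition smin n (S : {set 'I_n}) (x0 : 'I_n) : 'I_n :=
  odflt x0 [pick m in S | [forall j in S, (m <= j)%N]].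
Arguments smin {n}.

Lemma smin_spec n (S : {set 'I_n}) x0 : S != finset.set0 ->
  smin S x0 \in S /\ forall j, j \in S -> (smin S x0 <= j)%N.
Proof.
move=> /set0Pn [x xS]; rewrite /smin; case: pickP => [m /andP[mS /forallP h]|none] /=.
  by split=> // j jS; have := h j; rewrite jS.
case: (arg_minnP val xS) => m mS mmin.
have mS' : m \in S := mS; have := none m; rewrite mS' /=.
by move=> /negbT/forallPn [j]; rewrite negb_imply => /andP[jS]; rewrite mmin.
Qed.

Lemma train_len_le (R : realType) NRF Nt (alpha : R) (re im : 'I_Nt -> R) :
  (train_len NRF alpha re im <= Nt)%N.
Proof.
rewrite /train_len; case: ifP => // h.
by move: h; rewrite has_find size_enum_ord.
Qed.

Lemma Gset_meas d (Omega : measurableType d) (R : realType) Nt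
  (I : Omega -> {set 'I_Nt}) (re im : 'I_Nt -> Omega -> R) S
  (A B : 'I_Nt -> set R) :
  measurable [set w | I w = S] -> (forall i, measurable_fun setT (re i)) ->
  (forall i, measurable_fun setT (im i)) ->
  (forall i, measurable (A i)) -> (forall i, measurable (B i)) ->
  measurable [set w | I w = S /\ forall i, A i (re i w) /\ B i (im i w)].
Proof.
move=> mIS mre mim mA mB.
have -> : [set w | I w = S /\ forall i, A i (re i w) /\ B i (im i w)] =
  [set w | I w = S] `&` \bigcap_(i in [set: 'I_Nt]) ((re i @^-1` A i) `&` (im i @^-1` B i)).
  apply/seteqP; split => w /=.
    by move=> [-> h]; split => // i _; exact: h.
  by move=> [-> h]; split => // i; exact: h.
apply: measurableI => //; apply: fin_bigcap_measurable; first exact: finite_finset.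
move=> i _.
apply: measurableI.
  by rewrite -[X in measurable X]setTI; exact: mre.
by rewrite -[X in measurable X]setTI; exact: mim.
Qed.

Lemma integral_sum_indic3 d (T : measurableType d) (R : realType)
  (mu : {measure set T -> \bar R}) (J : finType) (c1 c2 c3 : J -> R)
  (A1 A2 A3 : J -> set T) :
  (forall j, 0 <= c1 j) -> (forall j, 0 <= c2 j) -> (forall j, 0 <= c3 j) ->
  (forall j, measurable (A1 j)) -> (forall j, measurable (A2 j)) ->
  (forall j, measurable (A3 j)) ->
  (\int[mu]_x (\sum_j (c1 j * \1_(A1 j) x + c2 j * \1_(A2 j) x
                       + c3 j * \1_(A3 j) x))%:E =
   \sum_j ((c1 j)%:E * mu (A1 j) + (c2 j)%:E * mu (A2 j)
           + (c3 j)%:E * mu (A3 j)))%E.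
Proof.
move=> c10 c20 c30 m1 m2 m3.
have ind0 : forall (A : set T) x, 0 <= \1_A x :> R by move=> A x; rewrite indicE ler0n.
have mi : forall (c : R) (A : set T), measurable A ->
    measurable_fun setT (fun x => (c * \1_A x)%:E).
  move=> c A mA; apply/measurable_EFinP; apply: measurable_funM => //.
under eq_integral do rewrite -sumEFin.
rewrite ge0_integral_sum //; last first.
  move=> j x _; rewrite lee_fin; apply: addr_ge0; [apply: addr_ge0|];
    by apply: mulr_ge0.
  move=> j; apply/measurable_EFinP; apply: measurable_funD; [apply: measurable_funD|];
    by apply/measurable_EFinP; apply: mi.
apply: eq_bigr => j _.
have ge : forall (c : R) (A : set T), 0 <= c -> forall x, setT x -> (0 <= (c * \1_A x)%:E)%E.
  by move=> c A c0 x _; rewrite lee_fin mulr_ge0.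
rewrite [X in integral _ _ X](_ : _ = (fun x => (c1 j * \1_(A1 j) x)%:E
   + (c2 j * \1_(A2 j) x)%:E + (c3 j * \1_(A3 j) x)%:E)%E); last first.
  by apply/funext => x; rewrite !EFinD.
have g1 := ge _ (A1 j) (c10 j); have g2 := ge _ (A2 j) (c20 j).
have g3 := ge _ (A3 j) (c30 j).
rewrite (@ge0_integralD _ _ _ mu setT measurableT _ _
  (fun x _ => adde_ge0 (g1 x I) (g2 x I)) _ g3 (mi _ _ (m3 j)))
  ; last by apply: emeasurable_funD; apply: mi.
rewrite (@ge0_integralD _ _ _ mu setT measurableT _ _ g1 (mi _ _ (m1 j)) g2 (mi _ _ (m2 j))).
have hone : forall (c : R) (A : set T), 0 <= c -> measurable A ->
    (\int[mu]_x (c * \1_A x)%:E = c%:E * mu A)%E.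
  move=> c A c0 mA; under eq_integral do rewrite EFinM.
  rewrite ge0_integralZl_EFin //.
    by rewrite integral_indic ?setIT.
  by apply/measurable_EFinP; exact: measurable_indic.
by rewrite (hone _ _ (c10 j) (m1 j)) (hone _ _ (c20 j) (m2 j)) (hone _ _ (c30 j) (m3 j)).
Qed.

Lemma prod_in_at (R : realType) n (S : {set 'I_n}) (m : 'I_n) (F : 'I_n -> \bar R) :
  m \in S -> (forall i, i \in S -> i != m -> F i = 1%E) -> (\prod_(i in S) F i = F m)%E.
Proof. by move=> mS h; rewrite (bigD1 m) //= big1 ?mule1 // => i /andP[iS im]; exact: h. Qed.

Lemma notK (R : realType) (s x : R) : 0 <= s -> ~ (`[(- s), s]%classic x) -> s ^+ 2 < x ^+ 2.
Proof.
move=> s0 h; have : ~~ ((- s <= x) && (x <= s)).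
  by apply/negP => hh; apply: h; rewrite /= in_itv /= hh.
by rewrite negb_and -!ltNge => /orP [] h1; nra.
Qed.

Theorem corollary1 (R : realType) (L : nat) (alpha : R) (NRF : nat) :
  (1 <= L)%N -> 0 < alpha -> (1 <= NRF)%N ->
  exists (C : R) (N0 : nat),
  forall (Nt : nat) (d : measure_display) (Omega : measurableType d)
         (P : probability Omega R)
         (I : Omega -> {set 'I_Nt}) (re im : 'I_Nt -> Omega -> R),
    (N0 <= Nt)%N -> (L <= Nt)%N ->
    (* measurability of the random objects *)
    (forall S : {set 'I_Nt}, measurable [set w | I w = S]) ->
    (forall i, measurable_fun setT (re i)) ->
    (forall i, measurable_fun setT (im i)) ->
    (* joint law: I uniform over L-subsets; given I, \bar h_i (i in I) are
       i.i.d. CN(0,1/L) (real and imaginary parts i.i.d. N(0, 1/(2L))),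
       and \bar h_i = 0 for i not in I *)
    (forall (S : {set 'I_Nt}) (A B : 'I_Nt -> set R),
        (forall i, measurable (A i)) -> (forall i, measurable (B i)) ->
        P [set w | I w = S /\ forall i, A i (re i w) /\ B i (im i w)] =
        (if #|S| == L then
           ((('C(Nt, L))%:R)^-1)%:E *
           (\prod_(i in S)
              (normal_prob 0 (Num.sqrt ((2 * L)%:R)^-1) (A i) *
               normal_prob 0 (Num.sqrt ((2 * L)%:R)^-1) (B i)))%E *
           (\prod_(i in ~: S) (\1_(A i) 0 * \1_(B i) 0))%:E
         else 0)%E) ->
    (`| \int[P]_w ((train_len NRF alpha (fun i => re i w) (fun i => im i w))%:R)%:E
        - (Nt%:R / (L.+1)%:R)%:E | <= C%:E)%E.
Proof.
move=> L1 a0 N1; case: L L1 => [//|L] L1.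
pose M := normal_peak (Num.sqrt ((2 * L.+1)%:R)^-1 : R).
have M0 : 0 <= M by apply: normal_peak_ge0.
exists (1 + 8 * M ^+ 2 * alpha), 1%N.
move=> Nt d Omega P I re im N0 LNt mI mre mim law.
set sig := Num.sqrt _ in law *.
have sig0 : sig != 0.
  by rewrite gt_eqF // sqrtr_gt0 invr_gt0 ltr0n muln_gt0.
set np := normal_prob 0 sig in law *.
have Nt0 : (0 < Nt)%N by apply: leq_trans LNt.
pose x0 : 'I_Nt := Ordinal Nt0.
pose r : R := alpha / Nt%:R.
have r0 : 0 < r by rewrite divr_gt0 // ltr0n.
pose s := Num.sqrt r.
have s0 : 0 < s by rewrite sqrtr_gt0.
have ssr : s ^+ 2 = r by rewrite sqr_sqrtr // ltW.
pose K : set R := `[(- s), s]%classic.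
have mK : measurable K by exact: measurable_itv.
pose p := fine (np K).
have npK : np K = p%:E.
  rewrite fineK // ge0_fin_numE ?measure_ge0 //.
  by apply: (le_lt_trans (probability_le1 np mK)); rewrite ltry.
have p0 : 0 <= p by rewrite -lee_fin -npK measure_ge0.
have p1 : p <= 1.
  by have h : (np K <= 1)%E := probability_le1 np mK; rewrite -lee_fin -npK.
have npKc : np (~` K) = (1 - p)%:E 
  by have h : np (~` K) = (1 - np K)%E := probability_setC np mK; rewrite h npK EFinB.
have npT : np setT = 1%E by have h : np setT = 1%E := probability_setT np.
have pM : p <= M * (s + s).
  rewrite -lee_fin -npK /np /normal_prob.
  apply: (@le_trans _ _ (\int[lebesgue_measure]_(x in K) (cst (M%:E : \bar R)) x))%E.
    apply: ge0_le_integral => //.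
    - by move=> x _; rewrite lee_fin normal_pdf_ge0.
    - apply/measurable_EFinP; apply: measurable_funTS; exact: measurable_normal_pdf.
    - by move=> x _; rewrite lee_fin normal_pdf_ub.
  have hK : (lebesgue_measure K = (s + s)%:E)%E.
    have h : (lebesgue_measure K = if ((- s)%:E < s%:E)%E then (s%:E - (- s)%:E)%E else 0%E)
      := lebesgue_measure_itv _.
    by rewrite h lte_fin ifT ?gtrN // -EFinB opprK.
  rewrite integral_cst //.
  apply: (@le_trans _ _ (M%:E * (s + s)%:E)%E); last by rewrite -EFinM.
  by rewrite le_eqVlt; apply/orP; left; apply/eqP; congr (_ * _)%E; exact: hK.
pose m := fun S : {set 'I_Nt} => smin S x0.
pose A1 := fun (S : {set 'I_Nt}) (i : 'I_Nt) =>
  if i \in S then (if i == m S then ~` K else setT) else [set (0:R)].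
pose B1 := fun (S : {set 'I_Nt}) (i : 'I_Nt) =>
  if i \in S then setT else [set (0:R)].
pose A2 := fun (S : {set 'I_Nt}) (i : 'I_Nt) =>
  if i \in S then (if i == m S then K else setT) else [set (0:R)].
pose B2 := fun (S : {set 'I_Nt}) (i : 'I_Nt) =>
  if i \in S then (if i == m S then ~` K else setT) else [set (0:R)].
pose Gs := fun (S : {set 'I_Nt}) (A B : 'I_Nt -> set R) =>
  [set w | I w = S /\ forall i, A i (re i w) /\ B i (im i w)].
pose G1 := fun S : {set 'I_Nt} => if #|S| == L.+1 then Gs S (A1 S) (B1 S) else set0.
pose G2 := fun S : {set 'I_Nt} => if #|S| == L.+1 then Gs S (A2 S) (B2 S) else set0.
pose E := fun S : {set 'I_Nt} => [set w | I w = S].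
pose H := fun S : {set 'I_Nt} => E S `\` (G1 S `|` G2 S).
have mA1 : forall S i, measurable (A1 S i).
  move=> S i; rewrite /A1; case: ifP => _; last exact: measurable_set1.
  by case: ifP => _ //; exact: measurableC.
have mA2 : forall S i, measurable (A2 S i).
  move=> S i; rewrite /A2; case: ifP => _; last exact: measurable_set1.
  by case: ifP => _ //.
have mB1 : forall S i, measurable (B1 S i).
  move=> S i; rewrite /B1; case: ifP => _ //; exact: measurable_set1.
have mB2 : forall S i, measurable (B2 S i).
  move=> S i; rewrite /B2; case: ifP => _; last exact: measurable_set1.
  by case: ifP => _ //; exact: measurableC.
have mG1 : forall S, measurable (G1 S).
  by move=> S; rewrite /G1; case: ifP => _ //; exact: Gset_meas.
have mG2 : forall S, measurable (G2 S).
  by move=> S; rewrite /G2; case: ifP => _ //; exact: Gset_meas.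
have mH : forall S, measurable (H S).
  by move=> S; apply: measurableD; [exact: mI|exact: measurableU].
have Sne : forall S : {set 'I_Nt}, #|S| == L.+1 -> S != finset.set0.
  by move=> S /eqP hS; rewrite -cards_eq0 hS -lt0n.
have mspec := fun S h => @smin_spec Nt S x0 (Sne S h).
pose Cinv : R := ('C(Nt, L.+1)%:R)^-1.
have PE : forall S, P (E S) = (if #|S| == L.+1 then Cinv else 0)%:E.
  move=> S.
  have h := law S (fun _ => setT) (fun _ => setT) (fun _ => measurableT) (fun _ => measurableT).
  have -> : E S = [set w | I w = S /\ forall i, setT (re i w) /\ setT (im i w)].
    by apply/seteqP; split => w /=; [move=> ->|case].
  rewrite h; case: ifP => _ //.
  rewrite big1; last by move=> i _; rewrite npT mule1.
  rewrite big1; last by move=> i _; rewrite indicE mem_set // mulr1.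
  by rewrite !mule1.
have PG1 : forall S, P (G1 S) = (if #|S| == L.+1 then Cinv * (1 - p) else 0)%:E.
  move=> S; rewrite /G1; case: ifP => hS; last by rewrite measure0.
  have [mS _] := mspec S hS.
  rewrite law ?hS //.
  rewrite (@prod_in_at _ _ S (m S) _ mS); last first.
    by move=> i iS imS; rewrite /A1 /B1 iS (negbTE imS) npT mule1.
  rewrite /A1 /B1 mS eqxx npKc npT mule1.
  rewrite big1; last first.
    by move=> i; rewrite inE => /negbTE iS; rewrite iS indicE mem_set // mulr1.
  by rewrite mule1 -EFinM.
have PG2 : forall S, P (G2 S) = (if #|S| == L.+1 then Cinv * (p * (1 - p)) else 0)%:E.
  move=> S; rewrite /G2; case: ifP => hS; last by rewrite measure0.
  have [mS _] := mspec S hS.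
  rewrite law ?hS //.
  rewrite (@prod_in_at _ _ S (m S) _ mS); last first.
    by move=> i iS imS; rewrite /A2 /B2 iS (negbTE imS) npT mule1.
  rewrite /A2 /B2 mS eqxx npKc npK.
  rewrite big1; last first.
    by move=> i; rewrite inE => /negbTE iS; rewrite iS indicE mem_set // mulr1.
  by rewrite mule1 -!EFinM.
have disj : forall S, G1 S `&` G2 S = set0.
  move=> S; rewrite /G1 /G2; case: ifP => hS; last by rewrite set0I.
  have [mS _] := mspec S hS.
  apply/seteqP; split => // w [[_ h1] [_ h2]].
  move: (h1 (m S)).1 (h2 (m S)).1; rewrite /A1 /A2 mS eqxx.
  by move=> + hK; apply.
have GE1 : forall S, G1 S `<=` E S.
  move=> S w; rewrite /G1; case: ifP => _; last by [].
  by case.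
have GE2 : forall S, G2 S `<=` E S.
  move=> S w; rewrite /G2; case: ifP => _; last by [].
  by case.
have PH : forall S, P (H S) = (if #|S| == L.+1 then Cinv * p ^+ 2 else 0)%:E.
  move=> S.
  have fH : P (H S) \is a fin_num.
    rewrite ge0_fin_numE ?measure_ge0 //.
    by apply: (le_lt_trans (probability_le1 P (mH S))); rewrite ltry.
  have h : P (E S) = (P (H S) + P (E S `&` (G1 S `|` G2 S)))%E
    by apply: measureDI; [exact: mI|exact: measurableU].
  have hI : E S `&` (G1 S `|` G2 S) = G1 S `|` G2 S.
    by apply: setIidr => w [/GE1|/GE2].
  rewrite hI in h.
  have hU : P (G1 S `|` G2 S) = (P (G1 S) + P (G2 S))%E.
    by apply: measureU; [exact: mG1|exact: mG2|exact: disj].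
  rewrite hU PE PG1 PG2 -(fineK fH) -!EFinD in h.
  have {}h := EFin_inj h.
  rewrite -(fineK fH); congr EFin.
  by case: ifP h => _ h; nra.
pose c := fun S : {set 'I_Nt} => (cnt S)%:R : R.
have c0 : forall S, 0 <= c S by move=> S; rewrite /c ler0n.
pose Tn := fun w => train_len NRF alpha (fun i => re i w) (fun i => im i w).
have key : forall S w, (G1 S w \/ G2 S w) -> Tn w = cnt S.
  move=> S w hw.
  have hS : #|S| == L.+1.
    by case: hw; rewrite /G1 /G2; case: ifP.
  have [mS mmin] := mspec S hS.
  rewrite (@cnt_min Nt S (m S) mS mmin).
  apply: (@train_len_min R NRF Nt alpha _ _ S (m S) N1 mS mmin).
  - move=> i iS.
    by case: hw; rewrite /G1 /G2 hS => -[_ h]; have := h i;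
      rewrite /A1 /B1 /A2 /B2 (negbTE iS) => -[-> ->].
  - have sq := sqr_ge0 (re (m S) w); have sq2 := sqr_ge0 (im (m S) w).
    rewrite /sqmag -/r -ssr.
    case: hw; rewrite /G1 /G2 hS => -[_ h]; have [h1 h2] := h (m S); move: h1 h2;
      rewrite /A1 /B1 /A2 /B2 mS eqxx => h1 h2.
      by have := @notK R s _ (ltW s0) h1; lra.
    by have := @notK R s _ (ltW s0) h2; lra.
  - exact: ltW.
have red : forall w (k : R),
    \sum_S (c S * \1_(G1 S) w + c S * \1_(G2 S) w + k * \1_(H S) w) =
    c (I w) * \1_(G1 (I w)) w + c (I w) * \1_(G2 (I w)) w + k * \1_(H (I w)) w.
  move=> w k; rewrite (bigD1 (I w)) //= big1 ?addr0 // => S SI.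
  have z : forall X : set Omega, X `<=` E S -> \1_X w = 0 :> R.
    move=> X XE; rewrite indicE memNset //= => /XE /= Iw.
    by rewrite Iw eqxx in SI.
  by rewrite (z _ (GE1 S)) (z _ (GE2 S)) (z (H S)) ?mulr0 ?addr0 // => x [].
have TnNt : forall w, (Tn w <= Nt)%N by move=> w; exact: train_len_le.
have pw : forall w (k : R), 0 <= k ->
    c (I w) * \1_(G1 (I w)) w + c (I w) * \1_(G2 (I w)) w <= (Tn w)%:R /\
    (Tn w)%:R <= c (I w) * \1_(G1 (I w)) w + c (I w) * \1_(G2 (I w)) w
                 + Nt%:R * \1_(H (I w)) w.
  move=> w k k0.
  have hE : E (I w) w by [].
  case: (pselect (G1 (I w) w)) => g1.
    have g2 : ~ G2 (I w) w.
      have hd : (G1 (I w) `&` G2 (I w)) w -> False by rewrite disj.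
      by move=> g2; apply: hd.
    have nH : ~ H (I w) w by case=> _; apply; left.
    rewrite (key (I w) w (or_introl g1)) !indicE (mem_set g1) (memNset g2) (memNset nH).
    by rewrite /c mulr1 !mulr0 !addr0.
  case: (pselect (G2 (I w) w)) => g2.
    have nH : ~ H (I w) w by case=> _; apply; right.
    rewrite (key (I w) w (or_intror g2)) !indicE (memNset g1) (mem_set g2) (memNset nH).
    by rewrite /c mulr1 !mulr0 add0r addr0.
  have hH : H (I w) w by split => // -[].
  rewrite !indicE (memNset g1) (memNset g2) (mem_set hH) !mulr0 !add0r mulr1.
  by split; [rewrite ler0n | rewrite ler_nat TnNt].
have nn : forall w (k : R), 0 <= k ->
    0 <= \sum_S (c S * \1_(G1 S) w + c S * \1_(G2 S) w + k * \1_(H S) w).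
  move=> w k k0; apply: sumr_ge0 => S _.
  by rewrite !addr_ge0 // mulr_ge0 // indicE ler0n.
have low : (\sum_S ((c S)%:E * P (G1 S) + (c S)%:E * P (G2 S) + (0:R)%:E * P (H S))
    <= \int[P]_w ((Tn w)%:R)%:E)%E.
  rewrite -(@integral_sum_indic3 _ _ _ P _ c c (fun _ => 0) G1 G2 H c0 c0 (fun _ => lexx 0) mG1 mG2 mH).
  apply: le_integral_any => w; rewrite lee_fin.
    exact: nn.
  by rewrite red mul0r addr0; have [] := pw w 0 (lexx 0).
have up : (\int[P]_w ((Tn w)%:R)%:E <=
    \sum_S ((c S)%:E * P (G1 S) + (c S)%:E * P (G2 S) + (Nt%:R : R)%:E * P (H S)))%E.
  rewrite -(@integral_sum_indic3 _ _ _ P _ c c (fun _ => Nt%:R) G1 G2 H c0 c0 (fun _ => ler0n _ _) mG1 mG2 mH).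
  apply: le_integral_any => w.
    by rewrite lee_fin.
  by rewrite lee_fin red; have [] := pw w _ (ler0n _ Nt).
pose X1 : R := Cinv * (1 - p) + Cinv * (p * (1 - p)).
pose Bn : R := 'C(Nt, L.+1)%:R.
pose Bn1 : R := 'C(Nt.+1, L.+2)%:R.
have Bn0 : Bn != 0 by rewrite pnatr_eq0 -lt0n bin_gt0.
have sumc : \sum_(S : {set 'I_Nt} | #|S| == L.+1) c S = Bn1 by rewrite /c -natr_sum sum_cnt.
have sumk : forall k : R, \sum_(S : {set 'I_Nt} | #|S| == L.+1) k = Bn * k.
  move=> k; rewrite /Bn; have -> : 'C(Nt, L.+1) = #|[set A : {set 'I_Nt} | #|A| == L.+1]%SET|.
    by rewrite card_draws card_ord.
  rewrite -sum1dep_card natr_sum mulr_suml.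
  by apply: eq_bigr => S _; rewrite mul1r.
have lowv : (\sum_S ((c S)%:E * P (G1 S) + (c S)%:E * P (G2 S) + (0:R)%:E * P (H S)))%E
    = (Bn1 * X1)%:E.
  rewrite (eq_bigr (fun S : {set 'I_Nt} => (if #|S| == L.+1 then c S * X1 else 0)%:E)); last first.
    move=> S _; rewrite PG1 PG2 PH /X1.
    by case: ifP => _; rewrite -!EFinM -!EFinD; congr EFin; ring.
  by rewrite sumEFin -big_mkcond /= -mulr_suml sumc.
have upv : (\sum_S ((c S)%:E * P (G1 S) + (c S)%:E * P (G2 S) + (Nt%:R : R)%:E * P (H S)))%E
    = (Bn1 * X1 + Bn * (Nt%:R * (Cinv * p ^+ 2)))%:E.
  rewrite (eq_bigr (fun S : {set 'I_Nt} => (if #|S| == L.+1 then c S * X1 + Nt%:R * (Cinv * p ^+ 2)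
     else 0)%:E)); last first.
    move=> S _; rewrite PG1 PG2 PH /X1.
    by case: ifP => _; rewrite -!EFinM -!EFinD; congr EFin; ring.
  by rewrite sumEFin -big_mkcond /= big_split /= -mulr_suml sumc sumk.
rewrite lowv in low; rewrite upv in up.
have hbin : (L.+2)%:R * Bn1 = (Nt.+1)%:R * Bn.
  by rewrite /Bn /Bn1 -!natrM -mul_bin_diag.
pose u : R := ((L.+2)%:R : R)^-1.
have L20 : (L.+2)%:R != 0 :> R by rewrite pnatr_eq0.
have u0 : 0 < u by rewrite invr_gt0 ltr0n.
have u1 : u <= 1 by rewrite invf_le1 ?ltr0n // ler1n.
pose Y := Bn1 * Cinv.
have hY : Y = Nt%:R * u + u.
  have hB1 : Bn1 = (Nt.+1)%:R * Bn / (L.+2)%:R.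
    by rewrite -hbin; field.
  rewrite /Y hB1 /Cinv -/Bn /u -natr1; field.
  by apply/andP; split.
have Xv : Bn1 * X1 = Y * (1 - p ^+ 2) by rewrite /X1 /Y; ring.
have Nv : Bn * (Nt%:R * (Cinv * p ^+ 2)) = Nt%:R * p ^+ 2.
  by rewrite /Cinv -/Bn; field.
have hp2 : p ^+ 2 <= 4 * M ^+ 2 * r.
  have Ms0 : 0 <= M * (s + s) by apply: le_trans pM.
  have h := ler_pM p0 p0 pM pM.
  rewrite expr2; apply: (le_trans h); rewrite -ssr le_eqVlt; apply/orP; left.
  by apply/eqP; ring.
have hNr : Nt%:R * r = alpha.
  by rewrite /r mulrC divfK // pnatr_eq0 -lt0n.
have hq : Nt%:R * p ^+ 2 <= 4 * M ^+ 2 * alpha.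
  rewrite -hNr; have h := ler_wpM2l (ler0n R Nt) hp2.
  by apply: (le_trans h); lra.
rewrite /Tn in low up.
set X := (\int[P]_w _)%E in low up *.
have fX : X \is a fin_num.
  rewrite fin_numElt (lt_le_trans _ low) ?ltNyr //.
  by rewrite (le_lt_trans up) ?ltry.
rewrite -(fineK fX) in low up *.
rewrite !lee_fin in low up.
rewrite -EFinB abse_EFin lee_fin ler_norml.
rewrite Xv Nv in low up.
set x := fine X in low up *.
have Nt1 : 1 <= Nt%:R :> R by rewrite ler1n.
have q0 : 0 <= p ^+ 2 by apply: sqr_ge0.
have hYq0 : 0 <= Y * p ^+ 2.
  rewrite hY; apply: mulr_ge0 => //; apply: addr_ge0; [apply: mulr_ge0; [exact: ler0n|exact: ltW]|exact: ltW].
have hYq : Y * p ^+ 2 <= 2 * (Nt%:R * p ^+ 2).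
  rewrite hY; have hNu : Nt%:R * u <= Nt%:R.
    by rewrite ler_piMr ?ler0n.
  nra.
have hZ : Nt%:R / (L.+2)%:R = Nt%:R * u by [].
rewrite hZ.
have M2a : 0 <= M ^+ 2 * alpha by rewrite mulr_ge0 ?sqr_ge0 // ltW.
apply/andP; split; nra.
Qed.
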